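(* Let $G$ be a finite abelian group and consider any $(k,l)$ fractional network code over $G$ that is a solution of the sum-network $\mathcal{S}_3'$. Then the map $(X_1,X_2,X_3)\mapsto$ (the pair of vectors carried on the edges $(u_1,v_1)$ and $(u_2,v_2)$) is injective on $G^k\times G^k\times G^k$; equivalently, terminal $t_3$ can recover each of $X_1,X_2,X_3$ individually. Consequently $|G|^{2l}\ge |G|^{3k}$.
   Context: The sum-network $\mathcal{S}_3'$ has sources $s_1,s_2,s_3$, terminals $t_1,t_2,t_3$, intermediate nodes $u_1,v_1,u_2,v_2,u_3$, and edges $(s_1,u_1),(s_3,u_1),(u_1,v_1),(v_1,t_1),(v_1,t_3),(s_2,u_2),(s_3,u_2),(u_2,v_2),(v_2,t_2),(v_2,t_3),(s_1,t_2),(s_1,t_1),(s_2,u_3),(s_1,u_3),(u_3,t_1)$. A $(k,l)$ fractional network code over $G$: each source $s_i$ holds $X_i\in G^k$ and sends on each outgoing edge a function $G^k\to G^l$ of $X_i$; each edge whose tail $v$ is not a source carries a function $G^{l|In(v)|}\to G^l$ of the vectors on the incoming edges of $v$; each terminal applies a decoding function $G^{l|In(t)|}\to G^k$. It is a solution if every terminal outputs $X_1+X_2+X_3$ (componentwise sum in $G^k$) for all messages. *)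

(* Defs.v *)
From HB Require Import structures.
From mathcomp Require Import all_boot all_order all_algebra.
Set Implicit Arguments. Unset Strict Implicit. Unset Printing Implicit Defensive.
Import GRing.Theory.
Local Open Scope ring_scope.

(* A function G^{l*m} -> G^l of the m incoming edge vectors of a node is
   represented in curried form, with one 'rV[G]_l argument per incoming edge. *)
Record S3code (G : finZmodType) (k l : nat) := S3Code {
  f_s1u1 : 'rV[G]_k -> 'rV[G]_l;
  f_s1t2 : 'rV[G]_k -> 'rV[G]_l;
  f_s1t1 : 'rV[G]_k -> 'rV[G]_l;
  f_s1u3 : 'rV[G]_k -> 'rV[G]_l;
  f_s2u2 : 'rV[G]_k -> 'rV[G]_l;
  f_s2u3 : 'rV[G]_k -> 'rV[G]_l;
  f_s3u1 : 'rV[G]_k -> 'rV[G]_l;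
  f_s3u2 : 'rV[G]_k -> 'rV[G]_l;
  f_u1v1 : 'rV[G]_l -> 'rV[G]_l -> 'rV[G]_l;
  f_v1t1 : 'rV[G]_l -> 'rV[G]_l;
  f_v1t3 : 'rV[G]_l -> 'rV[G]_l;
  f_u2v2 : 'rV[G]_l -> 'rV[G]_l -> 'rV[G]_l;
  f_v2t2 : 'rV[G]_l -> 'rV[G]_l;
  f_v2t3 : 'rV[G]_l -> 'rV[G]_l;
  f_u3t1 : 'rV[G]_l -> 'rV[G]_l -> 'rV[G]_l;
  (* decoders: In(t1) = {(v1,t1),(s1,t1),(u3,t1)},
     In(t2) = {(v2,t2),(s1,t2)}, In(t3) = {(v1,t3),(v2,t3)} *)
  dec_t1 : 'rV[G]_l -> 'rV[G]_l -> 'rV[G]_l -> 'rV[G]_k;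
  dec_t2 : 'rV[G]_l -> 'rV[G]_l -> 'rV[G]_k;
  dec_t3 : 'rV[G]_l -> 'rV[G]_l -> 'rV[G]_k
}.

Section Eval.
Context (G : finZmodType) (k l : nat) (C : S3code G k l).
Definition e_u1v1 (X1 X2 X3 : 'rV[G]_k) : 'rV[G]_l :=
  f_u1v1 C (f_s1u1 C X1) (f_s3u1 C X3).
Definition e_u2v2 (X1 X2 X3 : 'rV[G]_k) : 'rV[G]_l :=
  f_u2v2 C (f_s2u2 C X2) (f_s3u2 C X3).
Definition e_u3t1 (X1 X2 X3 : 'rV[G]_k) : 'rV[G]_l :=
  f_u3t1 C (f_s2u3 C X2) (f_s1u3 C X1).
Definition e_v1t1 (X1 X2 X3 : 'rV[G]_k) : 'rV[G]_l := f_v1t1 C (e_u1v1 X1 X2 X3).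
Definition e_v1t3 (X1 X2 X3 : 'rV[G]_k) : 'rV[G]_l := f_v1t3 C (e_u1v1 X1 X2 X3).
Definition e_v2t2 (X1 X2 X3 : 'rV[G]_k) : 'rV[G]_l := f_v2t2 C (e_u2v2 X1 X2 X3).
Definition e_v2t3 (X1 X2 X3 : 'rV[G]_k) : 'rV[G]_l := f_v2t3 C (e_u2v2 X1 X2 X3).

Definition out_t1 (X1 X2 X3 : 'rV[G]_k) : 'rV[G]_k :=
  dec_t1 C (e_v1t1 X1 X2 X3) (f_s1t1 C X1) (e_u3t1 X1 X2 X3).
Definition out_t2 (X1 X2 X3 : 'rV[G]_k) : 'rV[G]_k :=
  dec_t2 C (e_v2t2 X1 X2 X3) (f_s1t2 C X1).
Definition out_t3 (X1 X2 X3 : 'rV[G]_k) : 'rV[G]_k :=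
  dec_t3 C (e_v1t3 X1 X2 X3) (e_v2t3 X1 X2 X3).
End Eval.

Definition is_solution (G : finZmodType) (k l : nat) (C : S3code G k l) : Prop :=
  forall X1 X2 X3 : 'rV[G]_k,
    [/\ out_t1 C X1 X2 X3 = X1 + X2 + X3,
        out_t2 C X1 X2 X3 = X1 + X2 + X3
      & out_t3 C X1 X2 X3 = X1 + X2 + X3].

(* Main.v *)
Require Import Defs.
From mathcomp Require Import all_boot all_order all_algebra.
Import GRing.Theory.
Local Open Scope ring_scope.

Theorem mainTheorem6 (G : finZmodType) (k l : nat) (C : S3code G k l) :
  is_solution C ->
  injective (fun X : 'rV[G]_k * 'rV[G]_k * 'rV[G]_k =>
               (e_u1v1 C (fst (fst X)) (snd (fst X)) (snd X),
                e_u2v2 C (fst (fst X)) (snd (fst X)) (snd X)))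
  /\ (#|G| ^ (3 * k) <= #|G| ^ (2 * l))%N.
Proof.
move=> sol.
have inj : injective (fun X : 'rV[G]_k * 'rV[G]_k * 'rV[G]_k =>
               (e_u1v1 C (fst (fst X)) (snd (fst X)) (snd X),
                e_u2v2 C (fst (fst X)) (snd (fst X)) (snd X))).
  move=> [[X1 X2] X3] [[Y1 Y2] Y3] /= [ea eb].
  have s3 : X1 + X2 + X3 = Y1 + Y2 + Y3.
    have [_ _ h1] := sol X1 X2 X3; have [_ _ h2] := sol Y1 Y2 Y3.
    by rewrite -h1 -h2 /out_t3 /e_v1t3 /e_v2t3 ea eb.
  have s2 : X1 + X2 + X3 = X1 + Y2 + Y3.
    have [_ h1 _] := sol X1 X2 X3; have [_ h2 _] := sol X1 Y2 Y3.
    rewrite -h1 -h2 /out_t2 /e_v2t2; congr (dec_t2 _ (f_v2t2 _ _) _).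
    by rewrite eb /e_u2v2.
  have e1 : X1 = Y1.
    move: s3; rewrite s2 -!addrA => /addIr; done.
  subst Y1.
  have s1 : X1 + X2 + X3 = X1 + X2 + Y3.
    have [h1 _ _] := sol X1 X2 X3; have [h2 _ _] := sol X1 X2 Y3.
    rewrite -h1 -h2 /out_t1 /e_v1t1; congr (dec_t1 _ (f_v1t1 _ _) _ _).
    by rewrite ea /e_u1v1.
  have e3 : X3 = Y3 by move: s1 => /addrI.
  subst Y3.
  have e2 : X2 = Y2 by move: s2 => /addIr /addrI.
  by subst Y2.
split=> //.
pose f := (fun X : 'rV[G]_k * 'rV[G]_k * 'rV[G]_k =>
               (e_u1v1 C (fst (fst X)) (snd (fst X)) (snd X),
                e_u2v2 C (fst (fst X)) (snd (fst X)) (snd X)) : 'rV[G]_l * 'rV[G]_l).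
have := @leq_card _ _ f inj.
rewrite !card_prod !card_mx !mul1n -!expnD.
by rewrite !mulSn mul0n !addn0 addnA.
Qed.
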